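(* Let $\lambda\in\mathbb{C}$, let $(p_l)_{l\in\mathbb{Z}},(q_m)_{m\in\mathbb{Z}}$ be complex sequences, and let $u,v:\mathbb{Z}^2\to\mathbb{C}$ satisfy, for all $(l,m)\in\mathbb{Z}^2$ (with all denominators nonzero), \[ \widetilde{\overline u}-u-\frac{q_{m+1}-p_l}{\widetilde u}+\frac{q_m-p_{l+1}}{\overline u}=0,\qquad u-\widetilde{\overline v}-\frac{q_m-p_{l+1}}{\overline u}+\frac{\lambda-p_l}{\widetilde v}=0, \] \[ (u-v)\Big(\frac{q_m-p_l}{u}+\widetilde v\Big)-q_m+\lambda=0,\qquad \frac{q_m-p_l}{u}-\frac{\lambda-p_l}{v}-\overline u+\overline v=0. \] Then $v$ satisfies, for all $(l,m)$, \[ \begin{aligned} &q_m\big(v\overline v-\widetilde v\widetilde{\overline v}\big)^2+\big(v-\widetilde{\overline v}\big)\big(\overline v-\widetilde v\big)\big(\lambda-v\overline v\big)\big(\lambda-\widetilde v\widetilde{\overline v}\big) +\big(p_{l+1}v-p_l\widetilde{\overline v}\big)\big(p_l\overline v-p_{l+1}\widetilde v\big)\\ &\quad-(p_l+p_{l+1})\big(\lambda v\overline v+\lambda\widetilde v\widetilde{\overline v}-2v\overline v\widetilde v\widetilde{\overline v}\big) +\big(p_{l+1}v\widetilde v+p_l\overline v\widetilde{\overline v}\big)\big(2\lambda-v\overline v-\widetilde v\widetilde{\overline v}\big)=0. \end{aligned} \]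
   Context: Shift notation: for $f:\mathbb{Z}^2\to\mathbb{C}$, $f=f_{l,m}$, $\overline f=f_{l+1,m}$, $\widetilde f=f_{l,m+1}$, $\widetilde{\overline f}=f_{l+1,m+1}$; $p_l$ and $q_m$ are parameters depending only on $l$ and only on $m$ respectively. *)

(* Defs.v *)
From HB Require Import structures.
From mathcomp Require Import all_boot all_order all_algebra.
From mathcomp Require Import complex.
From mathcomp Require Import Rstruct.
From Stdlib Require Import Reals.
Set Implicit Arguments. Unset Strict Implicit. Unset Printing Implicit Defensive.
Import Order.TTheory GRing.Theory Num.Theory.

Definition C : Type := complex Rdefinitions.R.

(* Main.v *)
Require Import Defs.
From HB Require Import structures.
From mathcomp Require Import all_boot all_order all_algebra.
From mathcomp Require Import complex.
From mathcomp Require Import Rstruct.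
From mathcomp Require Import ring.
Import Order.TTheory GRing.Theory Num.Theory.
Local Open Scope ring_scope.

Theorem mainTheorem8 (lam : C) (p q : int -> C) (u v : int -> int -> C)
  (hu0 : forall l m : int, u l m != 0)
  (hv0 : forall l m : int, v l m != 0)
  (e1 : forall l m : int,
     u (l + 1) (m + 1) - u l m - (q (m + 1) - p l) / u l (m + 1)
       + (q m - p (l + 1)) / u (l + 1) m = 0)
  (e2 : forall l m : int,
     u l m - v (l + 1) (m + 1) - (q m - p (l + 1)) / u (l + 1) m
       + (lam - p l) / v l (m + 1) = 0)
  (e3 : forall l m : int,
     (u l m - v l m) * ((q m - p l) / u l m + v l (m + 1)) - q m + lam = 0)
  (e4 : forall l m : int,
     (q m - p l) / u l m - (lam - p l) / v l m - u (l + 1) m + v (l + 1) m = 0) :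
  forall l m : int,
    let v0 := v l m in
    let v1 := v (l + 1) m in
    let v2 := v l (m + 1) in
    let v12 := v (l + 1) (m + 1) in
    q m * (v0 * v1 - v2 * v12) ^+ 2
    + (v0 - v12) * (v1 - v2) * (lam - v0 * v1) * (lam - v2 * v12)
    + (p (l + 1) * v0 - p l * v12) * (p l * v1 - p (l + 1) * v2)
    - (p l + p (l + 1)) * (lam * v0 * v1 + lam * v2 * v12 - 2 * v0 * v1 * v2 * v12)
    + (p (l + 1) * v0 * v2 + p l * v1 * v12) * (2 * lam - v0 * v1 - v2 * v12)
    = 0.
Proof.
move=> l m v0 v1 v2 v12.
have E3 := e3 l m. have E4 := e4 l m. have E3b := e3 (l + 1) m.
have E2 := e2 l m.
move: E3 E4 E3b E2.
rewrite -/v0 -/v1 -/v2 -/v12.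
have hv := hv0 l m. have hvb := hv0 (l + 1) m. have hvt := hv0 l (m + 1).
rewrite -/v0 in hv; rewrite -/v1 in hvb; rewrite -/v2 in hvt.
set U := u l m. set Ub := u (l + 1) m.
set P := p (l + 1). set p0 := p l. set Q := q m.
move=> E3 E4 E3b E2.
have hu : U != 0 := hu0 l m. have hub : Ub != 0 := hu0 (l + 1) m.
clearbody v0 v1 v2 v12 U Ub P p0 Q.
have R1 : v2 * (U - v0) - v0 * (Ub - v1) = 0.
  have -> : v2 * (U - v0) - v0 * (Ub - v1) =
    ((U - v0) * ((Q - p0) / U + v2) - Q + lam)
    + v0 * ((Q - p0)/U - (lam - p0)/v0 - Ub + v1) by field; rewrite ?hv ?hu.
  by rewrite E3 E4 mulr0 addr0.
have R2 : v1 * U - v12 * Ub - (lam - P - v1 * (lam - p0) / v2) = 0.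
  have -> : v1 * U - v12 * Ub - (lam - P - v1 * (lam - p0) / v2) =
    - ((Ub - v1) * ((Q - P)/Ub + v12) - Q + lam)
    + v1 * (U - v12 - (Q - P)/Ub + (lam - p0)/v2) by field; rewrite ?hvt ?hub.
  by rewrite E3b E2 mulr0 addr0 oppr0.
set K : C := v0 * v1 - v2 * v12.
set L : C := v0 * (v12 * (v1 - v2) + (lam - P) - (lam - p0) * v1 / v2).
have KL : L - K * U = 0.
  have -> : L - K * U = - v0 * (v1 * U - v12 * Ub - (lam - P - v1 * (lam - p0) / v2))
     + v12 * (v2 * (U - v0) - v0 * (Ub - v1)) by rewrite /L /K; field; rewrite ?hvt.
  by rewrite R1 R2 !mulr0 addr0.
apply: (mulIf hv).
rewrite mul0r.
have -> : (Q * K ^+ 2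
    + (v0 - v12) * (v1 - v2) * (lam - v0 * v1) * (lam - v2 * v12)
    + (P * v0 - p0 * v12) * (p0 * v1 - P * v2)
    - (p0 + P) * (lam * v0 * v1 + lam * v2 * v12 - 2 * v0 * v1 * v2 * v12)
    + (P * v0 * v2 + p0 * v1 * v12) * (2 * lam - v0 * v1 - v2 * v12)) * v0
  = - K ^+ 2 * U * ((U - v0) * ((Q - p0) / U + v2) - Q + lam)
    - (L - K * U) * (v2 * (L + K * U) + (lam - p0 - v0 * v2) * K)
  by rewrite /L /K; field; rewrite ?hvt ?hu.
by rewrite E3 KL !mulr0 !mul0r subr0.
Qed.
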